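(* There exists a fragile graph with minimum degree $4$, and there exists a fragile graph with chromatic number $4$.
   Context: All graphs are finite and simple. A graph is $k$-connected if it has at least $k+1$ vertices and no vertex cutset with at most $k-1$ vertices. A graph is fragile if it has no $3$-connected subgraph. *)

(* Defs.v *)
From mathcomp Require Import all_boot.
Set Implicit Arguments. Unset Strict Implicit. Unset Printing Implicit Defensive.

Definition simple_graph (T : finType) (e : rel T) : Prop :=
  irreflexive e /\ symmetric e.

Definition subgraph (T : finType) (e : rel T) (S : {set T}) (f : rel T) : Prop :=
  simple_graph f /\
  (forall x y, f x y -> [&& x \in S, y \in S & e x y]).

Definition del_rel (T : finType) (S C : {set T}) (f : rel T) : rel T :=
  [rel x y | [&& f x y, x \in S :\: C & y \in S :\: C]].

Definition is_cutset (T : finType) (S : {set T}) (f : rel T) (C : {set T}) : Prop :=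
  C \subset S /\
  exists x y, [/\ x \in S :\: C, y \in S :\: C & ~~ connect (del_rel S C f) x y].

Definition k_connected (T : finType) (k : nat) (S : {set T}) (f : rel T) : Prop :=
  k.+1 <= #|S| /\ forall C : {set T}, #|C| <= k.-1 -> ~ is_cutset S f C.

Definition fragile (T : finType) (e : rel T) : Prop :=
  ~ exists (S : {set T}) (f : rel T), subgraph e S f /\ k_connected 3 S f.

Definition degree (T : finType) (e : rel T) (v : T) : nat := #|[set u | e v u]|.

Definition min_degree_eq (T : finType) (e : rel T) (d : nat) : Prop :=
  (forall v, d <= degree e v) /\ exists v, degree e v = d.

Definition proper_coloring (T : finType) (e : rel T) (k : nat) (c : T -> 'I_k) : Prop :=
  forall x y, e x y -> c x != c y.

Definition colorable (T : finType) (e : rel T) (k : nat) : Prop :=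
  exists c : T -> 'I_k, proper_coloring e c.

Definition chromatic_number_eq (T : finType) (e : rel T) (k : nat) : Prop :=
  colorable e k /\ forall j, j < k -> ~ colorable e j.

(* Main.v *)
Require Import Defs.
From mathcomp Require Import all_boot.
From mathcomp Require Import zify.

Set Implicit Arguments. Unset Strict Implicit. Unset Printing Implicit Defensive.

Section Refute.
Variables (T : finType) (e : rel T).
Hypothesis esym : symmetric e.

Fixpoint seek (A : Type) (p : A -> bool) (s : seq A) : option A :=
  match s with
  | [::] => None
  | x :: s' => if p x then Some x else seek p s'
  end.

Lemma seekP (A : Type) (p : A -> bool) s x : seek p s = Some x -> p x.
Proof. by elim: s => //= y s IH; case: ifP => [py [<-] | _ /IH]. Qed.

Definition grow (R K : seq T) : seq T :=
  K ++ [seq v <- R | (v \notin K) && has (fun u => e u v) K].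

Definition closedK (Q Z K : seq T) : bool :=
  all (fun u => all (fun v => (u \in Z) || (v \in Z) || ~~ e u v || ((u \in K) == (v \in K))) Q) Q.

Definition compK (Q Z : seq T) : seq T :=
  let R := [seq u <- Q | u \notin Z] in
  match R with
  | [::] => [::]
  | r :: _ => iter (size Q) (grow R) [:: r]
  end.

Definition sepP (Q : seq T) (p : T * T) : bool :=
  let Z := [:: p.1; p.2] in
  let K := compK Q Z in
  closedK Q Z K && has (fun u => (u \notin Z) && (u \notin K)) Q && (size K > 0).

Fixpoint refute (n : nat) (Q : seq T) : bool :=
  match n with
  | 0 => false
  | n'.+1 =>
    if size Q <= 3 then true else
    match seek (fun v => size (filter (e v) Q) <= 2) Q with
    | Some v => refute n' (filter (fun u => u != v) Q)
    | None =>
      match seek (sepP Q) [seq (x, y) | x <- Q, y <- Q] with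
      | Some p =>
        let Z := [:: p.1; p.2] in
        let K := compK Q Z in
        if refute n' (K ++ Z)
        then refute n' [seq u <- Q | (u \in Z) || (u \notin K)]
        else false
      | None => false
      end
    end
  end.

Lemma connect_inv (r : rel T) (P : pred T) :
  (forall a b, r a b -> P a -> P b) -> forall x y, connect r x y -> P x -> P y.
Proof.
move=> H x y /connectP [p pth ->] {y}.
elim: p x pth => //= z p IH x /andP[rxz pz] Px.
exact: IH pz (H _ _ rxz Px).
Qed.

Lemma peel S f v : subgraph e S f -> k_connected 3 S f -> v \in S ->
  2 < #|[set u in S | f v u]|.
Proof.
move=> [[irr sym] fE] [cS ncut] vS.
rewrite ltnNge; apply/negP => Hle.
apply: (ncut [set u in S | f v u] Hle).
set N := [set u in S | f v u].
have vN : v \notin N by rewrite inE irr andbF.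
split.
  by apply/subsetP => u; rewrite inE => /andP[].
have : ~~ (S \subset v |: N).
  apply/negP => sub; have := subset_leq_card sub.
  rewrite cardsU1 vN /= /N; move: Hle cS => /= Hle cS; lia.
case/subsetPn => y yS yN.
exists v, y; split.
- by rewrite inE vN vS.
- by rewrite inE yS andbT; apply: contra yN => H; rewrite in_setU1 H orbT.
- apply/negP => /connectP [p pth ylast].
  case: p pth ylast => [|w p] /=.
    by move=> _ yv; move: yN; rewrite yv in_setU1 eqxx.
  rewrite /del_rel /= => /andP[/and3P[fvw _ wSN] _] _.
  move: wSN; rewrite inE => /andP[wN wS].
  by move: wN; rewrite inE wS fvw.
Qed.

Lemma sep S f (Z : {set T}) (P : pred T) : subgraph e S f -> k_connected 3 S f -> #|Z| <= 2 ->
  (forall u v, u \in S -> v \in S -> u \notin Z -> v \notin Z -> e u v -> P u = P v) ->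
  {subset S <= [pred u | (u \in Z) || P u]} \/ {subset S <= [pred u | (u \in Z) || ~~ P u]}.
Proof.
move=> sg kc cZ HP.
case: (boolP [exists u, [&& u \in S, u \notin Z & ~~ P u]]) => [/existsP[u /and3P[uS uZ Pu]]|/existsPn H]; last first.
  left => w wS; move: (H w); rewrite wS /= inE.
  by case: (w \in Z); case: (P w).
case: (boolP [exists w, [&& w \in S, w \notin Z & P w]]) => [/existsP[w /and3P[wS wZ Pw]]|/existsPn H]; last first.
  right => x xS; move: (H x); rewrite xS /= inE.
  by case: (x \in Z); case: (P x).
exfalso.
case: sg => [[irr sym] fE].
case: kc => [cS ncut].
apply: (ncut (S :&: Z)).
  by apply: leq_trans (subset_leq_card (subsetIr S Z)) cZ.
split; first exact: subsetIl.
exists w, u; split.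
- by rewrite !inE wS wZ.
- by rewrite !inE uS uZ.
- apply/negP => Hc.
  suff Pu' : P u by rewrite Pu' in Pu.
  apply: (connect_inv (P := P) _ Hc Pw).
  move=> a b; rewrite /del_rel /= => /and3P[fab aS bS].
  move: aS bS; rewrite !inE => /andP[aZ aS] /andP[bZ bS].
  rewrite aS /= in aZ; rewrite bS /= in bZ.
  have /and3P[_ _ eab] := fE _ _ fab.
  by rewrite (HP a b aS bS aZ bZ eab).
Qed.

Lemma refute_sound n Q S f : refute n Q -> subgraph e S f -> k_connected 3 S f ->
  {subset S <= Q} -> False.
Proof.
move=> + sg kc; elim: n Q => //= n IH Q.
case: ifP => [cQ _ sQ | _].
  have : S \subset Q by apply/subsetP.
  move/subset_leq_card; have := card_size Q; case: kc => cS _ H1 H2.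
  have := leq_trans H2 (leq_trans H1 cQ); lia.
case E: seek => [v|].
  have dv := seekP E; move=> /IH H sQ.
  apply: H => u uS; rewrite mem_filter (sQ _ uS) andbT.
  apply/negP => /eqP uv; subst u.
  have := peel sg kc uS.
  have : #|[set u in S | f v u]| <= size (filter (e v) Q).
    apply: leq_trans (card_size _); apply: subset_leq_card; apply/subsetP => w.
    rewrite !inE => /andP[wS fvw].
    case: sg => _ fE; have /and3P[_ _ evw] := fE _ _ fvw.
    by rewrite mem_filter evw (sQ _ wS).
  lia.
case E2: seek => [[a b]|] //.
have := seekP E2; rewrite /sepP /= => /andP[/andP[cl _] _].
set Z := [:: a; b] in cl *; set K := compK Q Z in cl *.
case: ifP => // h1 h2 sQ.
set Zs := [set a; b].
have cZ : #|Zs| <= 2 by rewrite /Zs cards2; case: (a != b).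
have inZ : forall u, (u \in Zs) = (u \in Z) by move=> u; rewrite !inE.
have HP : forall u v, u \in S -> v \in S -> u \notin Zs -> v \notin Zs -> e u v ->
    (u \in K) = (v \in K).
  move=> u v uS vS uZ vZ euv.
  have uQ := sQ _ uS; have vQ := sQ _ vS.
  move/allP: cl => /(_ u uQ) /allP /(_ v vQ).
  by rewrite -!inZ (negbTE uZ) (negbTE vZ) euv /= => /eqP.
case: (sep (P := mem K) sg kc cZ HP) => sub.
  apply: (IH _ h1) => u /sub; rewrite inE inZ mem_cat.
  by rewrite orbC.
apply: (IH _ h2) => u uS; have := sub _ uS; rewrite inE inZ mem_filter (sQ _ uS) andbT.
by [].
Qed.

End Refute.

Definition mkrel n (E : seq (nat * nat)) : rel 'I_n :=
  fun x y => ((nat_of_ord x, nat_of_ord y) \in E) || ((nat_of_ord y, nat_of_ord x) \in E).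

Lemma mkrel_sym n E : symmetric (@mkrel n E).
Proof. by move=> x y; rewrite /mkrel orbC. Qed.

Definition mkOrd (n m : nat) : option 'I_n :=
  (if m < n as b return (m < n = b -> option 'I_n)
   then fun H => Some (Ordinal H) else fun _ => None) erefl.

Definition verts n : seq 'I_n := pmap (mkOrd n) (iota 0 n).

Lemma verts_all n : map val (verts n) = iota 0 n -> forall i : 'I_n, i \in verts n.
Proof.
by move=> H i; rewrite -(mem_map val_inj) H mem_iota /= add0n ltn_ord.
Qed.

Definition E14 : seq (nat * nat) :=
  flatten [seq let k := 6 * c in
    [:: (0, 2+k); (0, 3+k); (2+k, 3+k); (2+k, 4+k); (2+k, 5+k); (3+k, 4+k);
        (3+k, 5+k); (4+k, 6+k); (4+k, 7+k); (5+k, 6+k); (5+k, 7+k); (6+k, 7+k);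
        (6+k, 1); (7+k, 1)] | c <- [:: 0; 1]].

Definition e14 := @mkrel 14 E14.

Lemma e14_ok : refute e14 30 (verts 14).
Proof. vm_compute. reflexivity. Qed.

Lemma verts_forall n (p : pred 'I_n) : map val (verts n) = iota 0 n ->
  all p (verts n) -> forall x, p x.
Proof. by move=> H /allP A x; apply: A; apply: verts_all. Qed.

Lemma degree_eq n (e : rel 'I_n) v : map val (verts n) = iota 0 n ->
  degree e v = size (filter (e v) (verts n)).
Proof.
move=> H; rewrite /degree.
have U : uniq (verts n) by rewrite -(map_inj_uniq val_inj) H iota_uniq.
rewrite -(card_uniqP (filter_uniq _ U)).
by apply: eq_card => u; rewrite inE mem_filter verts_all // andbT.
Qed.

Lemma simple_mk n E : map val (verts n) = iota 0 n ->
  all (fun x => ~~ mkrel E x x) (verts n) -> simple_graph (@mkrel n E).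
Proof.
move=> H A; split; last exact: mkrel_sym.
by move=> x; apply/negbTE; apply: (verts_forall (p := fun x => ~~ mkrel E x x)).
Qed.

Lemma v14 : map val (verts 14) = iota 0 14. Proof. by vm_compute. Qed.
Lemma v7 : map val (verts 7) = iota 0 7. Proof. by vm_compute. Qed.

Definition E7 : seq (nat*nat) :=
  [:: (0,1);(0,2);(1,2);(1,3);(2,3);(0,4);(0,5);(4,5);(4,6);(5,6);(3,6)].
Definition e7 := @mkrel 7 E7.

Lemma e7_ok : refute e7 20 (verts 7).
Proof. vm_compute. reflexivity. Qed.

Definition col7 (x : 'I_7) : 'I_4 :=
  nth (@Ordinal 4 0 isT)
    [:: @Ordinal 4 0 isT; @Ordinal 4 1 isT; @Ordinal 4 2 isT; @Ordinal 4 0 isT;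
        @Ordinal 4 1 isT; @Ordinal 4 2 isT; @Ordinal 4 3 isT] x.

Lemma pig (a b c d : nat) : a != b -> c != a -> c != b -> d != a -> d != b ->
  a < 3 -> b < 3 -> c < 3 -> d < 3 -> c = d.
Proof. move=> *; lia. Qed.

Theorem mainTheorem4 :
  (exists (T : finType) (e : rel T),
      [/\ simple_graph e, fragile e & min_degree_eq e 4]) /\
  (exists (T : finType) (e : rel T),
      [/\ simple_graph e, fragile e & chromatic_number_eq e 4]).
Proof.
split.
  exists 'I_14, e14; split.
  - by apply: simple_mk v14 _; vm_compute.
  - move=> [S [f [sg kc]]].
    apply: (@refute_sound _ e14 30 (verts 14) S f e14_ok sg kc).
    by move=> u _; apply: verts_all v14 u.
  - split.
      move=> v; rewrite degree_eq; last exact: v14.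
      by apply: (verts_forall (p := fun v => 4 <= size (filter (e14 v) (verts 14)))) v14 _ v; vm_compute.
    by exists (@Ordinal 14 0 isT); rewrite degree_eq; [vm_compute | exact: v14].
exists 'I_7, e7; split.
- by apply: simple_mk v7 _; vm_compute.
- move=> [S [f [sg kc]]].
  apply: (@refute_sound _ e7 20 (verts 7) S f e7_ok sg kc).
  by move=> u _; apply: verts_all v7 u.
split.
  exists col7 => x y.
  have A : forall x, all (fun y => ~~ e7 x y || (col7 x != col7 y)) (verts 7).
    by apply: verts_forall v7 _; vm_compute.
  move/allP: (A x) => /(_ y (verts_all v7 y)).
  by case: (e7 x y).
move=> j jlt [c pc].
pose d (x : 'I_7) := val (c x).
have ne : forall x y, e7 x y -> d x != d y by move=> x y h; exact: (pc x y h).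
have bd : forall x, d x < 3 by move=> x; exact: leq_trans (ltn_ord (c x)) jlt.
pose v0 := @Ordinal 7 0 isT. pose v1 := @Ordinal 7 1 isT.
pose v2 := @Ordinal 7 2 isT. pose v3 := @Ordinal 7 3 isT.
pose v4 := @Ordinal 7 4 isT. pose v5 := @Ordinal 7 5 isT.
pose v6 := @Ordinal 7 6 isT.
have h3 : d v3 = d v0.
  apply: (pig (a := d v1) (b := d v2)); try apply: ne; try apply: bd; exact: isT.
have h6 : d v6 = d v0.
  apply: (pig (a := d v4) (b := d v5)); try apply: ne; try apply: bd; exact: isT.
by have := ne v3 v6 isT; rewrite h3 h6 eqxx.
Qed.
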